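(* Let $G=(V,E)$ be a finite simple undirected graph with zipper constraint collection $\mathcal{Z}$, let $D\subseteq Z^2$, and let $\mathbb{S}$ be a downstream-enabled prescription on $D$. Then the boundary inclusion $\bar{\mathbb{S}}$, regarded as a prescription on the domain $\bar D$, is downstream enabled.
   Context: A zipper constraint collection is a finite set $\mathcal{Z}=\{(U_1,W_1,y_1),\dots,(U_m,W_m,y_m)\}$, where each $U_i,W_i\in E$ is an edge of $G$ and each $y_i$ is a label. Let $Z^2=\{U_1,\dots,U_m,W_1,\dots,W_m\}$. Write $P\uparrow Q$ if $(P,Q,y)\in\mathcal{Z}$ for some $y$, and let $\rightsquigarrow$ be the transitive closure of $\uparrow$ on $Z^2$. A prescription on a domain $D\subseteq Z^2$ is a subset $\mathbb{S}\subseteq D$. It is downstream enabled if, whenever $P_a\in\mathbb{S}$ and $P_a\rightsquigarrow P_b$, we have $P_b\in\mathbb{S}$ or $P_b\notin D$. The boundary inclusion is defined as follows. Let $F^{\mathrm{off}}=\{P_a\in Z^2\setminus D:\exists P_b\in D\setminus\mathbb{S},\ P_a\rightsquigarrow P_b\}$ and $F^{\mathrm{on}}=\{P_c\in Z^2\setminus D:\exists P_d\in\mathbb{S},\ P_d\rightsquigarrow P_c\}$. Then $\bar D=D\cup F^{\mathrm{off}}\cup F^{\mathrm{on}}$ and $\bar{\mathbb{S}}=\mathbb{S}\cup F^{\mathrm{on}}$, which is a prescription on $\bar D$ whose off pairs are $\bar D\setminus\bar{\mathbb{S}}$. *)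

(* Defs.v *)
From mathcomp Require Import all_boot.
Set Implicit Arguments. Unset Strict Implicit. Unset Printing Implicit Defensive.

Section Zipper.
Variables (V : finType) (Y : eqType).

Definition simple_graph (e : rel V) : Prop := symmetric e /\ irreflexive e.

Definition edges (e : rel V) : {set {set V}} :=
  [set A : {set V} | [exists x, exists y, e x y && (A == [set x; y])]].

Definition zipper_collection (e : rel V) (Z : seq ({set V} * {set V} * Y)) : Prop :=
  forall t, t \in Z -> t.1.1 \in edges e /\ t.1.2 \in edges e.

Definition Z2 (Z : seq ({set V} * {set V} * Y)) : {set {set V}} :=
  [set P | has (fun t => (t.1.1 == P) || (t.1.2 == P)) Z].

Definition zup (Z : seq ({set V} * {set V} * Y)) : rel {set V} :=
  fun P Q => has (fun t => (t.1.1 == P) && (t.1.2 == Q)) Z.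

(* ⇝ : transitive (non-reflexive) closure of ↑ *)
Definition zreach (Z : seq ({set V} * {set V} * Y)) (P Q : {set V}) : bool :=
  [exists R, zup Z P R && connect (zup Z) R Q].

Definition prescription (Z : seq ({set V} * {set V} * Y)) (D S : {set {set V}}) : Prop :=
  D \subset Z2 Z /\ S \subset D.

Definition downstream_enabled (Z : seq ({set V} * {set V} * Y)) (D S : {set {set V}}) : Prop :=
  forall Pa Pb, Pa \in S -> zreach Z Pa Pb -> Pb \in S \/ Pb \notin D.

Definition F_off (Z : seq ({set V} * {set V} * Y)) (D S : {set {set V}}) : {set {set V}} :=
  [set Pa in Z2 Z :\: D | [exists Pb in D :\: S, zreach Z Pa Pb]].

Definition F_on (Z : seq ({set V} * {set V} * Y)) (D S : {set {set V}}) : {set {set V}} :=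
  [set Pc in Z2 Z :\: D | [exists Pd in S, zreach Z Pd Pc]].

Definition Dbar Z D S := D :|: F_off Z D S :|: F_on Z D S.
Definition Sbar Z D S := S :|: F_on Z D S.

End Zipper.

(* Main.v *)
Require Import Defs.
From mathcomp Require Import all_boot.

Lemma zup_Z2 {V : finType} {Y : eqType} {Z : seq ({set V} * {set V} * Y)} {P Q} :
  zup Z P Q -> Q \in Z2 Z.
Proof.
move=> /hasP [t tZ /andP [_ /eqP <-]].
rewrite inE; apply/hasP; exists t => //; by rewrite eqxx orbT.
Qed.

Lemma zreach_Z2 {V : finType} {Y : eqType} {Z : seq ({set V} * {set V} * Y)} {P Q} :
  zreach Z P Q -> Q \in Z2 Z.
Proof.
move=> /existsP [R /andP [PR /connectP [p pth ->]]].
case/lastP: p pth => [|p z] /=; first by move=> _; exact: zup_Z2 PR.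
rewrite rcons_path last_rcons => /andP [_ h]; exact: zup_Z2 h.
Qed.

Lemma zreach_trans {V : finType} {Y : eqType} {Z : seq ({set V} * {set V} * Y)} {P Q W} :
  zreach Z P Q -> zreach Z Q W -> zreach Z P W.
Proof.
move=> /existsP [R /andP [PR RQ]] /existsP [R' /andP [QR' R'W]].
apply/existsP; exists R; rewrite PR /=.
apply: connect_trans RQ _; apply: connect_trans R'W; exact: connect1.
Qed.

Theorem mainTheorem7 (V : finType) (Y : eqType) (e : rel V)
    (Z : seq ({set V} * {set V} * Y)) (D S : {set {set V}}) :
  simple_graph e ->
  zipper_collection e Z ->
  prescription Z D S ->
  downstream_enabled Z D S ->
  prescription Z (Dbar Z D S) (Sbar Z D S) /\
  downstream_enabled Z (Dbar Z D S) (Sbar Z D S).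
Proof.
move=> _ _ [DZ SD] dse.
have key : forall Pd Pb, Pd \in S -> zreach Z Pd Pb ->
    Pb \in Sbar Z D S \/ Pb \notin Dbar Z D S.
  move=> Pd Pb Pd_S r; left.
  case: (dse _ _ Pd_S r) => [h|h]; rewrite /Sbar inE; first by rewrite h.
  apply/orP; right; rewrite /F_on inE !inE h.
  have z2 := zreach_Z2 r; rewrite inE in z2; rewrite z2.
  rewrite /=.
  by apply/existsP; exists Pd; rewrite Pd_S r.
split.
  split.
    apply/subsetP => P; rewrite /Dbar !in_setU => /orP [/orP [h|]|].
    - exact: (subsetP DZ).
    - by rewrite /F_off in_set in_setD => /andP [/andP [_ ->]].
    - by rewrite /F_on in_set in_setD => /andP [/andP [_ ->]].
  apply/subsetP => P; rewrite /Sbar /Dbar !in_setU => /orP [h|->]; last by rewrite orbT.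
  by rewrite (subsetP SD _ h).
move=> Pa Pb; rewrite /Sbar inE => /orP [h r|]; first exact: key h r.
rewrite /F_on inE => /andP [_ /existsP [Pd /andP [Pd_S r1]]] r2.
exact: key Pd_S (zreach_trans r1 r2).
Qed.
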